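(* Let $n$ and $k$ be integers with $2 \leq k \leq n-2$, and let $M$ be the positroid on ground set $[n]$ of rank $k$ with Grassmann necklace $(I_1, I_2, \dots, I_n)$. Then $M$ is a sparse paving matroid if and only if for every $i \in [n]$, $I_i \neq C_{k,n}^{(i)}$ implies that $I_{i-1} = C_{k,n}^{(i-1)}$, $I_{i+1} = C_{k,n}^{(i+1)}$, and $I_i = (C_{k,n}^{(i)} \setminus \{i + k - 1\}) \cup \{i+k\}$ (all indices and elements computed modulo $n$ with representatives in $[n]$). Moreover, in this case, the set of circuit-hyperplanes of $M$ consists precisely of the sets $C_{k,n}^{(i)}$ for those $i\in[n]$ with $I_i \neq C_{k,n}^{(i)}$.
   Context: For $t\in[n]$, the order $<_t$ on $[n]$ is $t <_t t+1 <_t \cdots <_t n <_t 1 <_t \cdots <_t t-1$. For $k$-subsets $I=\{a_1<_t\cdots<_t a_k\}$ and $J=\{b_1<_t\cdots<_t b_k\}$ of $[n]$, write $I\leq_t J$ if $a_i\leq_t b_i$ for all $i$. A Grassmann necklace is a sequence $(I_1,\dots,I_n)$ of $k$-subsets of $[n]$ such that (indices modulo $n$) if $i\in I_i$ then $I_{i+1}=(I_i\setminus\{i\})\cup\{j\}$ for some $j\in[n]$, and if $i\notin I_i$ then $I_{i+1}=I_i$. The positroid with Grassmann necklace $(I_1,\dots,I_n)$ is the matroid on $[n]$ whose set of bases is $\bigcap_{t=1}^n\{J\in\binom{[n]}{k}: I_t\leq_t J\}$; equivalently, for a positroid $M$ of rank $k$, $I_t$ is the $\leq_t$-minimal basis of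 $M$. For $i\in[n]$, $C_{k,n}^{(i)}=\{i,i+1,\dots,i+k-1\}$ computed modulo $n$ with representatives in $[n]$ (the cyclic interval of size $k$ starting at $i$). A matroid of rank $k$ is paving if every circuit has cardinality at least $k$, and sparse paving if both it and its dual are paving. A circuit-hyperplane is a set that is both a circuit and a hyperplane. *)

(* Defs.v *)
(* Ground set [n] is encoded as 'I_n: the ordinal j stands
   for the element j+1 of [n]; likewise indices i in [n] are 'I_n. *)
From mathcomp Require Import all_boot.
Set Implicit Arguments. Unset Strict Implicit. Unset Printing Implicit Defensive.

Section Defs.
Variable n : nat.

Lemma ord_pos (i : 'I_n) : 0 < n.
Proof. exact: leq_ltn_trans (leq0n i) (ltn_ord i). Qed.

Definition shift (i : 'I_n) (m : nat) : 'I_n :=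
  Ordinal (ltn_pmod (i + m) (ord_pos i)).
Definition csucc (i : 'I_n) : 'I_n := shift i 1.
Definition cpred (i : 'I_n) : 'I_n := shift i (n - 1).

(* position of x in the cyclic order <_t starting at t *)
Definition tkey (t x : 'I_n) : nat := (x + n - t) %% n.
Definition tle (t : 'I_n) : rel 'I_n := fun x y => tkey t x <= tkey t y.
Definition tsorted (t : 'I_n) (A : {set 'I_n}) : seq 'I_n :=
  sort (tle t) (enum A).
Definition gale_le (t : 'I_n) (A B : {set 'I_n}) : bool :=
  (#|A| == #|B|) &&
  [forall i : 'I_#|A|,
     tle t (nth t (tsorted t A) i) (nth t (tsorted t B) i)].

Definition grassmann_necklace (k : nat) (I : 'I_n -> {set 'I_n}) : Prop :=
  (forall i, #|I i| = k) /\
  (forall i, if i \in I i then exists j, I (csucc i) = (I i :\ i) :|: [set j]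
             else I (csucc i) = I i).

Definition positroid_bases (k : nat) (I : 'I_n -> {set 'I_n})
  : {set {set 'I_n}} :=
  [set J : {set 'I_n} | (#|J| == k) && [forall t, gale_le t (I t) J]].

Definition cyc_int (k : nat) (i : 'I_n) : {set 'I_n} :=
  [set shift i m | m : 'I_k].

Variable B : {set {set 'I_n}}.
Definition indep (X : {set 'I_n}) : bool := [exists b in B, X \subset b].
Definition circuit (X : {set 'I_n}) : bool :=
  ~~ indep X && [forall Y : {set 'I_n}, (Y \proper X) ==> indep Y].
Definition mrank (X : {set 'I_n}) : nat := \max_(b in B) #|X :&: b|.
Definition flat (X : {set 'I_n}) : bool :=
  [forall e, (e \notin X) ==> (mrank X < mrank (e |: X))].
Definition hyperplane (X : {set 'I_n}) : bool :=
  flat X && (mrank X == (mrank [set: 'I_n]).-1).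
Definition circuit_hyperplane (X : {set 'I_n}) : bool :=
  circuit X && hyperplane X.
Definition paving : bool :=
  [forall C : {set 'I_n}, circuit C ==> (mrank [set: 'I_n] <= #|C|)].
End Defs.

Definition dual_bases n (B : {set {set 'I_n}}) : {set {set 'I_n}} :=
  [set ~: b | b in B].
Definition sparse_paving n (B : {set {set 'I_n}}) : bool :=
  paving B && paving (dual_bases B).

(* Main.v *)
Require Import Defs.
From mathcomp Require Import all_boot zify.
Set Implicit Arguments. Unset Strict Implicit. Unset Printing Implicit Defensive.

Section Basic.
Variable n : nat.
Implicit Types (t x : 'I_n) (i : 'I_n).

Lemma shift_add i a b : shift (shift i a) b = shift i (a + b).
Proof. by apply: val_inj => /=; rewrite modnDml addnA. Qed.
Lemma shift_n i m : shift i (m + n) = shift i m.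
Proof. by apply: val_inj => /=; rewrite addnA modnDr. Qed.
Lemma shift0 i : shift i 0 = i.
Proof. by apply: val_inj => /=; rewrite addn0 modn_small. Qed.
Lemma shift_inj i a b : a < n -> b < n -> shift i a = shift i b -> a = b.
Proof.
move=> ha hb /(congr1 val) /= /eqP; rewrite eqn_modDl !modn_small //.
by move/eqP.
Qed.
Lemma tkey_lt t x : tkey t x < n.
Proof. exact: ltn_pmod (ord_pos t). Qed.
Lemma shift_tkey t x : shift t (tkey t x) = x.
Proof.
apply: val_inj => /=; rewrite /tkey modnDmr subnKC.
  by rewrite modnDr modn_small.
by apply: leq_trans (ltnW (ltn_ord t)) (leq_addl _ _).
Qed.
Lemma tkey_shift t m : m < n -> tkey t (shift t m) = m.
Proof. by move=> hm; apply: (@shift_inj t _ _ (tkey_lt _ _) hm); rewrite shift_tkey. Qed.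
Lemma shift_eqE t a b : a < n -> b < n -> (shift t a == shift t b) = (a == b).
Proof.
move=> ha hb; apply/eqP/eqP; first exact: shift_inj.
by move=> ->.
Qed.

Definition P t m := [set x | tkey t x < m].
Definition cnt t (A : {set 'I_n}) m := #|A :&: P t m|.

Lemma inP t m x : (x \in P t m) = (tkey t x < m).
Proof. by rewrite inE. Qed.

Lemma Pimg t j : j <= n -> P t j = [set shift t (val m) | m : 'I_j].
Proof.
move=> hj; apply/setP => x; rewrite inE; apply/idP/imsetP.
  by move=> h; exists (Ordinal h) => //; rewrite shift_tkey.
by case=> m _ ->; rewrite tkey_shift ?ltn_ord //; apply: leq_trans (ltn_ord m) hj.
Qed.
Lemma card_P t j : j <= n -> #|P t j| = j.
Proof.
move=> hj; rewrite Pimg // card_imset ?card_ord // => a b h.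
apply: val_inj; apply: (@shift_inj t) h.
  exact: leq_trans (ltn_ord a) hj.
exact: leq_trans (ltn_ord b) hj.
Qed.
Lemma cycP k t : k <= n -> cyc_int k t = P t k.
Proof. by move=> hk; rewrite Pimg. Qed.

Lemma tkey_self t : tkey t t = 0.
Proof. by rewrite /tkey addKn modnn. Qed.

Lemma count_le_pw (a b : seq nat) m : size a = size b ->
  (forall i : nat, i < size a -> nth 0 a i <= nth 0 b i) ->
  count (fun v => v < m) b <= count (fun v => v < m) a.
Proof.
elim: a b => [|x a IH] [|y b] //= [hs] h.
have := h 0 isT => /= hxy.
apply: leq_add; last by apply: IH => // i hi; apply: (h i.+1).
case: (ltnP y m) => hy //; by rewrite (leq_ltn_trans hxy hy).
Qed.

Lemma pw_count_le (a b : seq nat) : size a = size b -> sorted leq a -> sorted leq b ->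
  (forall m, count (fun v => v < m) b <= count (fun v => v < m) a) ->
  forall i : nat, i < size a -> nth 0 a i <= nth 0 b i.
Proof.
move=> hs sa sb h i hi; rewrite leqNgt; apply/negP => hlt.
set m0 := (nth 0 b i).+1.
have hc := h m0.
have e1 : count (fun v => v < m0) (drop i a) = 0.
  apply/eqP; rewrite -leqn0 leqNgt -has_count; apply/hasPn => v.
  move=> /(nthP 0) [j hj <-]; rewrite size_drop in hj.
  rewrite nth_drop /m0 ltnS -ltnNge.
  apply: leq_trans hlt _; apply: sorted_leq_nth => //; try exact: leq_trans; rewrite ?inE /= ?leq_addr //.
  by rewrite -ltn_subRL.
have e2 : count (fun v => v < m0) (take i.+1 b) = i.+1.
  have /eqP -> : count (fun v => v < m0) (take i.+1 b) == size (take i.+1 b).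
    rewrite -all_count; apply/allP => v /(nthP 0) [j hj <-].
    rewrite size_take in hj; rewrite nth_take; last by move: hj; case: ifP; lia.
    rewrite ltnS; apply: sorted_leq_nth => //; try exact: leq_trans; rewrite ?inE /=; move: hj; case: ifP; lia.
  rewrite size_take; case: ifP => //; lia.
have e3 : count (fun v => v < m0) (take i a) <= i.
  by apply: leq_trans (count_size _ _) _; rewrite size_take; case: ifP; lia.
move: hc; rewrite -[in X in _ <= X](cat_take_drop i a) -[in X in X <= _](cat_take_drop i.+1 b) !count_cat e1 e2.
lia.
Qed.

Definition ks t (A : {set 'I_n}) := map (tkey t) (tsorted t A).

Lemma size_ks t (A : {set 'I_n}) : size (ks t A) = #|A|.
Proof. by rewrite size_map size_sort cardE. Qed.
Lemma sorted_ks t (A : {set 'I_n}) : sorted leq (ks t A).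
Proof.
rewrite /ks sorted_map; apply: sort_sorted => x y.
by rewrite /relpre /tle leq_total.
Qed.
Lemma count_ks t (A : {set 'I_n}) m : count (fun v => v < m) (ks t A) = cnt t A m.
Proof.
rewrite /ks count_map /tsorted (permP (permEl (perm_sort _ _))) -size_filter.
rewrite -(card_uniqP (filter_uniq _ (enum_uniq _))) /cnt.
by apply: eq_card => x; rewrite mem_filter mem_enum !inE andbC.
Qed.
Lemma nth_ks t (A : {set 'I_n}) (i : nat) : i < #|A| -> nth 0 (ks t A) i = tkey t (nth t (tsorted t A) i).
Proof.
move=> hi; rewrite -(tkey_self t) (nth_map t) //.
by rewrite size_sort -cardE.
Qed.

Lemma gale_cnt t (A J : {set 'I_n}) : #|A| = #|J| ->
  gale_le t A J <-> (forall m, cnt t J m <= cnt t A m).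
Proof.
move=> hAJ; rewrite /gale_le hAJ eqxx /=; split.
- move=> /forallP h m; rewrite -!count_ks; apply: count_le_pw; first by rewrite !size_ks.
  move=> i; rewrite size_ks => hi.
  have hi' : i < #|J| by rewrite -hAJ.
  have := h (Ordinal hi'); rewrite /tle /= -!nth_ks //; by rewrite -hAJ.
- move=> h; apply/forallP => i.
  have hi : (i : nat) < #|J| by [].
  have hi' : (i : nat) < #|A| by rewrite hAJ.
  rewrite /tle -(nth_ks _ hi') -(nth_ks _ hi).
  apply: pw_count_le; rewrite ?size_ks ?sorted_ks //.
  by move=> m; rewrite !count_ks.
Qed.

End Basic.

Section Mat.
Variable n : nat.
Variable B : {set {set 'I_n}}.
Implicit Types (X b : {set 'I_n}).

Lemma indepP X : reflect (exists2 b, b \in B & X \subset b) (indep B X).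
Proof. by apply: (iffP existsP) => [[b /andP[]]|[b h1 h2]]; [exists b|exists b; apply/andP]. Qed.

Lemma mrank_ge X b : b \in B -> #|X :&: b| <= mrank B X.
Proof. by move=> hb; rewrite /mrank; apply: (leq_bigmax_cond (F := fun b => #|X :&: b|) b hb). Qed.

Lemma mrank_le X m : (forall b, b \in B -> #|X :&: b| <= m) -> mrank B X <= m.
Proof. by move=> h; rewrite /mrank; apply/bigmax_leqP. Qed.

Lemma mrank_full r b0 : b0 \in B -> (forall b, b \in B -> #|b| = r) -> mrank B setT = r.
Proof.
move=> h0 hB; apply/eqP; rewrite eqn_leq; apply/andP; split.
  by apply: mrank_le => b hb; rewrite setTI hB.
by have := mrank_ge setT h0; rewrite setTI hB.
Qed.

Lemma paving_iff : paving B <-> (forall X, #|X| < mrank B setT -> indep B X).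
Proof.
split.
- move=> /forallP hp.
  suff H : forall N X, #|X| <= N -> ~~ indep B X -> mrank B setT <= #|X|.
    move=> X hX; case: (boolP (indep B X)) => // hi.
    by have := H _ X (leqnn _) hi; rewrite leqNgt hX.
  elim=> [|N IH] X hX hi.
    case: (boolP [forall Y : {set 'I_n}, (Y \proper X) ==> indep B Y]) => hall.
      by have := hp X; rewrite /circuit hi hall.
    move: hall; rewrite negb_forall => /existsP [Y]; rewrite negb_imply => /andP[hY hYi].
    by have := proper_card hY; lia.
  case: (boolP [forall Y : {set 'I_n}, (Y \proper X) ==> indep B Y]) => hall.
    by have := hp X; rewrite /circuit hi hall.
  move: hall; rewrite negb_forall => /existsP [Y]; rewrite negb_imply => /andP[hY hYi].
  have hc := proper_card hY.
  have := IH Y ltac:(lia) hYi; lia.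
- move=> h; apply/forallP => C; apply/implyP => /andP[hC _].
  rewrite leqNgt; apply/negP => hlt; exact: (negP hC (h C hlt)).
Qed.

Lemma dual_indepP X :
  reflect (exists2 b, b \in B & b \subset ~: X) (indep (dual_bases B) X).
Proof.
apply: (iffP existsP) => [[c /andP[/imsetP [b hb ->] hs]]|[b hb hs]].
  by exists b => //; rewrite subsetC.
by exists (~: b); rewrite imset_f //= -subsetC.
Qed.

End Mat.

Lemma dual_mrank n (B : {set {set 'I_n}}) r b0 : b0 \in B -> (forall b, b \in B -> #|b| = r) ->
  mrank (dual_bases B) setT = n - r.
Proof.
move=> h0 hB; apply: (mrank_full (b0 := ~: b0)); first by rewrite /dual_bases imset_f.
by move=> c /imsetP [b hb ->]; have := cardsC b; rewrite card_ord hB //; lia.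
Qed.


Lemma ext_set (T : finType) (C : {set T}) d : forall A : {set T},
  A \subset C -> #|A| + d <= #|C| -> exists D : {set T}, [/\ A \subset D, D \subset C & #|D| = #|A| + d].
Proof.
elim: d => [|d IH] A hAC hc.
  by exists A; rewrite addn0.
have : ~~ (C \subset A).
  apply/negP => hCA; have := subset_leq_card hCA; lia.
case/subsetPn => x hxC hxA.
have h1 : x |: A \subset C by rewrite subUset sub1set hxC.
have h2 : #|x |: A| = #|A|.+1 by rewrite cardsU1 hxA.
have [D [hD1 hD2 hD3]] := IH _ h1 ltac:(lia).
exists D; split => //; last by lia.
by apply: subset_trans hD1; apply: subsetUr.
Qed.

Lemma shiftn n (i : 'I_n) : shift i n = i.
Proof. by have := shift_n i 0; rewrite add0n shift0. Qed.

Ltac lia2 := unfold reverse_coercion in *; cbv beta in *; lia.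

Section Wrap.
Variable n : nat.
Implicit Types A B : {set 'I_n}.
Lemma sub_card A B : A \subset B -> #|A| <= #|B|.
Proof. exact: subset_leq_card. Qed.
Lemma cU1 a A : #|a |: A| = (a \notin A) + #|A|.
Proof. exact: cardsU1. Qed.
Lemma cD1 a A : #|A| = (a \in A) + #|A :\ a|.
Proof. exact: cardsD1. Qed.
Lemma cC A : #|A| + #|~: A| = n.
Proof. by rewrite cardsC card_ord. Qed.
Lemma cID A B : #|A :&: B| + #|A :\: B| = #|A|.
Proof. exact: cardsID. Qed.
End Wrap.

Section Main.
Variables (n k : nat) (I : 'I_n -> {set 'I_n}).
Hypotheses (hk2 : 2 <= k) (hkn : k <= n - 2) (hN : grassmann_necklace k I).

Let hkn' : k.+1 < n. Proof. lia. Qed.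
Let hcard i : #|I i| = k. Proof. by case: hN => h _; apply: h. Qed.
Let hstep i : if i \in I i then exists j, I (csucc i) = (I i :\ i) :|: [set j]
             else I (csucc i) = I i.
Proof. by case: hN => _ h; apply: h. Qed.

Notation Bs := (positroid_bases k I).
Implicit Types (t s i : 'I_n).

Lemma csucc_shift (x : 'I_n) : csucc x = shift x 1. Proof. by []. Qed.

Lemma ML (x : 'I_n) e a : a \in I x -> (forall d, d < e -> shift x d != a) ->
  a \in I (shift x e).
Proof.
move=> ha; elim: e => [|e IH] hs; first by rewrite shift0.
have hy : a \in I (shift x e) by apply: IH => d hd; apply: hs; lia.
have -> : shift x e.+1 = csucc (shift x e) by rewrite csucc_shift shift_add addn1.
have hne : shift x e != a by apply: hs.
have := hstep (shift x e); case: ifP => _.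
  by case=> j ->; rewrite !inE hy eq_sym hne.
by move=> ->.
Qed.

Lemma NL t s m : cnt t (I s) m <= cnt t (I t) m.
Proof.
set d := tkey t s.
have hs : s = shift t d by rewrite shift_tkey.
have hd : d < n by apply: tkey_lt.
case: (leqP m d) => hm.
  apply: sub_card; apply/subsetP => x; rewrite !inE => /andP[hx hk].
  rewrite hk andbT.
  have -> : t = shift s (n - d).
    by rewrite hs shift_add subnKC ?(ltnW hd) // shiftn.
  apply: ML => // d' hd'; rewrite hs shift_add; apply/negP => /eqP hx'.
  move: hk; rewrite -hx' tkey_shift; lia.
have hsub : I t :\: P t m \subset I s :\: P t m.
  apply/subsetP => x; rewrite !inE => /andP[hk hx]; rewrite hk /=.
  rewrite hs; apply: ML => // d' hd'; apply/negP => /eqP hx'.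
  move: hk; rewrite -hx' tkey_shift; lia.
have e0 : #|I t :\: P t m| <= #|I s :\: P t m| := sub_card hsub.
have e1 : #|I t :&: P t m| + #|I t :\: P t m| = k by rewrite cardsID hcard.
have e2 : #|I s :&: P t m| + #|I s :\: P t m| = k by rewrite cardsID hcard.
rewrite /cnt; lia.
Qed.

Lemma inB J : J \in Bs <-> #|J| = k /\ forall t m, cnt t J m <= cnt t (I t) m.
Proof.
rewrite inE; split.
  case/andP => /eqP hJ /forallP h; split => // t m.
  by move: (h t) => /gale_cnt; apply; rewrite hcard.
case=> hJ h; rewrite hJ eqxx /=; apply/forallP => t.
by apply/gale_cnt; [rewrite hcard | apply: h].
Qed.

Lemma I_in_B s : I s \in Bs.
Proof. by apply/inB; split; [apply: hcard | move=> t m; apply: NL]. Qed.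

Lemma B_card b : b \in Bs -> #|b| = k.
Proof. by case/inB. Qed.

Lemma shapeE t : cyc_int k t :\ shift t (k - 1) :|: [set shift t k] =
  P t (k - 1) :|: [set shift t k].
Proof.
rewrite cycP; last by lia.
congr (_ :|: _); apply/setP => x; rewrite !inE.
rewrite -{1}(shift_tkey t x) shift_eqE ?tkey_lt //; last by lia.
have := tkey_lt t x; case: (tkey t x =P k - 1) => /= [->|h]; lia.
Qed.

Lemma card_shape t : #|P t (k - 1) :|: [set shift t k]| = k.
Proof.
rewrite setUC cardsU1 card_P; last by lia.
rewrite inP tkey_shift; last by lia.
have -> : (k < k - 1) = false by lia.
lia.
Qed.

Section SP.
Hypothesis SP1 : forall X : {set 'I_n}, #|X| < k -> exists2 b, b \in Bs & X \subset b.
Hypothesis SP2 : forall U : {set 'I_n}, k < #|U| -> exists2 b, b \in Bs & b \subset U.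

Lemma Shape t : I t != P t k -> I t = P t (k - 1) :|: [set shift t k].
Proof.
move=> hne.
have s1 : P t (k - 1) \subset I t.
  apply/negPn/negP => hn.
  have [b hb hsub] := @SP1 (P t (k - 1)) ltac:(rewrite card_P; lia).
  have := proj2 (proj1 (inB b) hb) t (k - 1).
  rewrite /cnt (setIidPr hsub) card_P; last by lia.
  have hle : #|I t :&: P t (k - 1)| <= #|P t (k - 1)| := sub_card (subsetIr _ _).
  have hneq : #|I t :&: P t (k - 1)| != #|P t (k - 1)|.
    apply/negP => /eqP he.
    have : I t :&: P t (k - 1) == P t (k - 1) by rewrite eqEcard subsetIr he leqnn.
    move/eqP => he2; move: hn; rewrite -he2 subsetIl //.
  move: hle hneq; rewrite card_P; last by lia.
  lia.
have s2 : shift t k \in I t.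
  apply/negPn/negP => hn.
  have [b hb hsub] := @SP2 (P t k.+1) ltac:(rewrite card_P; lia).
  have := proj2 (proj1 (inB b) hb) t k.+1.
  rewrite /cnt (setIidPl hsub) B_card //.
  have hs : I t :&: P t k.+1 \subset I t :&: P t k.
    apply/subsetP => x; rewrite !inE => /andP[hx hkx]; rewrite hx /=.
    rewrite ltn_neqAle -ltnS hkx andbT; apply/eqP => hkk.
    by move: hn; rewrite -hkk shift_tkey hx.
  have : #|I t :&: P t k| < k.
    have hle : #|I t :&: P t k| <= #|I t| := sub_card (subsetIl _ _).
    rewrite hcard in hle.
    have hneq : #|I t :&: P t k| != k.
      apply/negP => /eqP he.
      have : I t :&: P t k == I t by rewrite eqEcard subsetIl he hcard leqnn.
      move/eqP => he2.
      have hIP : I t \subset P t k by rewrite -he2 subsetIr.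
      move: hne; rewrite eqEcard hIP card_P ?hcard //; lia.
    lia.
  have := sub_card hs; lia.
apply/eqP; rewrite eq_sym eqEcard card_shape hcard leqnn andbT.
by rewrite subUset sub1set s1 s2.
Qed.

Lemma Cond i : I i != cyc_int k i ->
        [/\ I (cpred i) = cyc_int k (cpred i),
            I (csucc i) = cyc_int k (csucc i) &
            I i = (cyc_int k i :\ shift i (k - 1)) :|: [set shift i k]].
Proof.
have hkn1 : k <= n by lia.
move=> hne0; have hne : I i != P i k by rewrite -cycP.
have hi := Shape hne.
have hmem0 (t : 'I_n) : I t = P t (k - 1) :|: [set shift t k] -> t \in I t.
  move=> ->; rewrite !inE -{2}(shift0 t) tkey_shift; lia.
split; last by rewrite shapeE.
- rewrite (cycP _ hkn1); case: (eqVneq (I (cpred i)) (P (cpred i) k)) => // hne'.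
  have hp := Shape hne'.
  have := hstep (cpred i); rewrite hmem0 // => -[j].
  have -> : csucc (cpred i) = i.
    by rewrite csucc_shift shift_add subnK; [rewrite shiftn | lia].
  move=> hij.
  have : shift (cpred i) k \in I i.
    rewrite hij; apply/setUP; left; apply/setD1P; split.
      rewrite -{2}(shift0 (cpred i)) shift_eqE; lia.
    by rewrite hp !inE eqxx orbT.
  have -> : shift (cpred i) k = shift i (k - 1).
    by rewrite shift_add -(shift_n i (k - 1)); congr shift; lia.
  rewrite hi !inE tkey_shift ?shift_eqE; lia.
- rewrite (cycP _ hkn1); case: (eqVneq (I (csucc i)) (P (csucc i) k)) => // hne'.
  have hp := Shape hne'.
  have := hstep i; rewrite hmem0 // => -[j] hij.
  have : shift i k \in I (csucc i).
    rewrite hij; apply/setUP; left; apply/setD1P; split.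
      rewrite -{2}(shift0 i) shift_eqE; lia.
    by rewrite hi !inE eqxx orbT.
  have -> : shift i k = shift (csucc i) (k - 1).
    by rewrite csucc_shift shift_add; congr shift; lia.
  rewrite hp !inE tkey_shift ?shift_eqE; lia.
Qed.

End SP.


Section Cnd.
Hypothesis HC : forall i : 'I_n, I i != cyc_int k i ->
        [/\ I (cpred i) = cyc_int k (cpred i),
            I (csucc i) = cyc_int k (csucc i) &
            I i = (cyc_int k i :\ shift i (k - 1)) :|: [set shift i k]].

Let hkn1 : k <= n. Proof. lia. Qed.

Lemma HCshape t : I t != P t k -> I t = P t (k - 1) :|: [set shift t k].
Proof.
move=> h; have h' : I t != cyc_int k t by rewrite cycP.
by case: (HC h') => _ _ ->; rewrite shapeE.
Qed.

Lemma HCsucc t : I t != P t k -> I (csucc t) = P (csucc t) k.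
Proof.
move=> h; have h' : I t != cyc_int k t by rewrite cycP.
by case: (HC h') => _ -> _; rewrite cycP.
Qed.

Lemma Bchar J : J \in Bs <->
  #|J| = k /\ (forall i, I i != P i k -> J != P i k).
Proof.
split.
  move/inB => [hJ h]; split => // i hi; apply/negP => /eqP hJi.
  have := h i k; rewrite /cnt hJi setIid card_P // (HCshape hi).
  have hs : (P i (k - 1) :|: [set shift i k]) :&: P i k \subset P i (k - 1).
    apply/subsetP => x; rewrite !inE => /andP[/orP[] // /eqP -> ].
    rewrite tkey_shift; lia.
  have := sub_card hs; rewrite card_P; unfold reverse_coercion in *; cbv beta in *; lia.
case=> hJ h; apply/inB; split => // t m.
case: (eqVneq (I t) (P t k)) => he.
  rewrite /cnt he; case: (leqP m k) => hm.
    apply: sub_card; apply/subsetP => x; rewrite !inE => /andP[_ hx].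
    rewrite hx andbT; lia.
  have -> : P t k :&: P t m = P t k.
    apply/setIidPl/subsetP => x; rewrite !inE; lia.
  rewrite card_P //; have := sub_card (subsetIl J (P t m)); lia.
have hJt := h t he.
rewrite /cnt (HCshape he); case: (ltnP m k) => hm.
  apply: sub_card; apply/subsetP => x; rewrite !inE => /andP[_ hx].
  rewrite hx andbT; apply/orP; left; lia.
case: (leqP m k) => hm'.
  have -> : m = k by lia.
  have h1 : P t (k - 1) \subset (P t (k - 1) :|: [set shift t k]) :&: P t k.
    apply/subsetP => x; rewrite !inE => hx; rewrite hx /=; lia.
  have := sub_card h1; rewrite card_P; last by lia.
  have : #|J :&: P t k| != k.
    apply/negP => /eqP he2.
    have : J :&: P t k == J by rewrite eqEcard subsetIl he2 hJ leqnn.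
    move/eqP => he3.
    have hJP : J \subset P t k by rewrite -he3 subsetIr.
    by move: hJt; rewrite eqEcard hJP card_P // hJ leqnn.
  have := sub_card (subsetIl J (P t k)); rewrite hJ.
  lia2.
have hs : P t (k - 1) :|: [set shift t k] \subset (P t (k - 1) :|: [set shift t k]) :&: P t m.
  apply/subsetP => x hx; rewrite inE hx /=; move: hx; rewrite !inE => /orP[hx|/eqP ->].
    lia.
  rewrite tkey_shift; lia.
have := sub_card hs; rewrite card_shape.
have := sub_card (subsetIl J (P t m)); rewrite hJ.
lia2.
Qed.

Lemma near i j (X : {set 'I_n}) : I i != P i k -> I j != P j k -> i != j ->
  X \subset P i k -> X \subset P j k -> #|X| = k - 1 -> False.
Proof.
move=> hi hj hij hXi hXj hX.
have hj1 : j != csucc i.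
  by apply/eqP => e; move: hj; rewrite e HCsucc // eqxx.
have hi1 : i != csucc j.
  by apply/eqP => e; move: hi; rewrite e HCsucc // eqxx.
set d := tkey i j.
have hjd : j = shift i d by rewrite shift_tkey.
have hd : d < n by apply: tkey_lt.
have hd0 : d != 0.
  by apply/eqP => e; move: hij; rewrite hjd e shift0 eqxx.
have hd1 : d != 1.
  by apply/eqP => e; move: hj1; rewrite hjd e csucc_shift eqxx.
have hdn : d != n - 1.
  apply/eqP => e; move: hi1; rewrite hjd e csucc_shift shift_add subnK; last by lia.
  by rewrite shiftn eqxx.
have hdr : (1 < d) && (d < n - 1).
  move: hd0 hd1 hdn hd; clear; lia.
clear hd0 hd1 hdn hi1 hj1.
have out a : a < d -> k <= a + n - d -> shift i a \notin P j k.
  move=> ha hk; have -> : shift i a = shift j (a + n - d).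
    rewrite hjd shift_add; have -> : d + (a + n - d) = a + n by move: ha hd; clear; lia.
    by rewrite shift_n.
  rewrite inP tkey_shift; move: ha hk hdr; clear; lia.
have inn a : a < k -> shift i a \in P i k.
  by move=> ha; rewrite inP tkey_shift //; move: ha hkn; clear; lia.
have o1 : shift i (minn d k - 1) \notin P j k.
  by apply: out; move: hdr hkn hk2; clear; lia.
have o2 : shift i (minn d k - 2) \notin P j k.
  by apply: out; move: hdr hkn hk2; clear; lia.
have n12 : shift i (minn d k - 1) != shift i (minn d k - 2).
  by rewrite shift_eqE; move: hdr hkn hk2; clear; lia.
have hS : shift i (minn d k - 1) |: (shift i (minn d k - 2) |: X) \subset P i k.
  by rewrite !subUset !sub1set hXi !inn //; move: hdr hkn hk2; clear; lia.
have c2 : shift i (minn d k - 2) \notin X by apply: contra o2; apply: (subsetP hXj).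
have c1 : shift i (minn d k - 1) \notin shift i (minn d k - 2) |: X.
  by rewrite !inE negb_or n12 /=; apply: contra o1; apply: (subsetP hXj).
have := sub_card hS; rewrite cU1 c1 cU1 c2 hX card_P //.
move: hk2; clear; lia.
Qed.

Lemma SPA (X : {set 'I_n}) : #|X| < k -> exists2 b, b \in Bs & X \subset b.
Proof.
move=> hX.
have [X' [h1 _ h3]] := @ext_set _ setT (k - 1 - #|X|) X (subsetT _)
  ltac:(rewrite cardsT card_ord; lia).
have hX' : #|X'| = k - 1 by rewrite h3; lia.
have : 1 < #|~: X'| by have := cardsC X'; rewrite card_ord; lia.
case/card_gt1P => e [f [he hf hef]].
rewrite inE in he; rewrite inE in hf.
have ce : #|e |: X'| = k by rewrite cardsU1 he hX'; lia.
have cf : #|f |: X'| = k by rewrite cardsU1 hf hX'; lia.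
case: (boolP (e |: X' \in Bs)) => hbe.
  by exists (e |: X') => //; apply: subset_trans h1 (subsetUr _ _).
case: (boolP (f |: X' \in Bs)) => hbf.
  by exists (f |: X') => //; apply: subset_trans h1 (subsetUr _ _).
have ex (J : {set 'I_n}) : #|J| = k -> J \notin Bs ->
    exists2 i, I i != P i k & J = P i k.
  move=> cy hy.
  case: (boolP [exists i, (I i != P i k) && (J == P i k)]) => [/existsP [i /andP [h1' /eqP h2']]|hn].
    by exists i.
  exfalso; move/negP: hy; apply; apply/Bchar; split => // i hi.
  apply/negP => /eqP e0; move/negP: hn; apply; apply/existsP; exists i; by rewrite hi e0 eqxx.
have [i hi ei] := ex _ ce hbe.
have [j hj ej] := ex _ cf hbf.
exfalso; apply: (@near i j X') => //.
- apply/eqP => eij; move: ei; rewrite eij -ej => e0.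
  have : e \in f |: X' by rewrite -e0 setU11.
  by rewrite !inE (negbTE hef) (negbTE he).
- by rewrite -ei subsetUr.
- by rewrite -ej subsetUr.
Qed.

Lemma SPB (U : {set 'I_n}) : k < #|U| -> exists2 b, b \in Bs & b \subset U.
Proof.
move=> hU.
have [U' [_ h2 h3]] := @ext_set _ U k.+1 set0 (sub0set _) ltac:(rewrite cards0; lia).
rewrite cards0 add0n in h3.
have : 1 < #|U'| by lia.
case/card_gt1P => y [z [hy hz hyz]].
have c1 : #|U' :\ y| = k by have := cD1 y U'; rewrite hy h3; lia.
have c2 : #|U' :\ z| = k by have := cD1 z U'; rewrite hz h3; lia.
have ex (J : {set 'I_n}) : #|J| = k -> J \notin Bs ->
    exists2 i, I i != P i k & J = P i k.
  move=> cy hy'.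
  case: (boolP [exists i, (I i != P i k) && (J == P i k)]) => [/existsP [i /andP [h1' /eqP h2']]|hn].
    by exists i.
  exfalso; move/negP: hy'; apply; apply/Bchar; split => // i hi.
  apply/negP => /eqP e0; move/negP: hn; apply; apply/existsP; exists i; by rewrite hi e0 eqxx.
case: (boolP (U' :\ y \in Bs)) => hb1.
  by exists (U' :\ y) => //; apply: subset_trans h2; apply: subD1set.
case: (boolP (U' :\ z \in Bs)) => hb2.
  by exists (U' :\ z) => //; apply: subset_trans h2; apply: subD1set.
have [i hi ei] := ex _ c1 hb1.
have [j hj ej] := ex _ c2 hb2.
exfalso; apply: (@near i j (U' :\ y :\ z)) => //.
- apply/eqP => eij; move: ei; rewrite eij -ej => e0.
  have : z \in U' :\ y by rewrite !inE eq_sym hyz hz.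
  by rewrite e0 !inE eqxx.
- by rewrite -ei subD1set.
- rewrite -ej; apply/subsetP => x; rewrite !inE => /and3P[-> _ ->]; done.
- have := cD1 z (U' :\ y); rewrite c1 !inE eq_sym hyz hz /=; lia2.
Qed.


End Cnd.
End Main.

Unset Implicit Arguments.

Theorem theorem3p2 (n k : nat) (I : 'I_n -> {set 'I_n}) :
  2 <= k -> k <= n - 2 -> grassmann_necklace k I ->
  (sparse_paving (positroid_bases k I) <->
     (forall i : 'I_n, I i != cyc_int k i ->
        [/\ I (cpred i) = cyc_int k (cpred i),
            I (csucc i) = cyc_int k (csucc i) &
            I i = (cyc_int k i :\ shift i (k - 1)) :|: [set shift i k]]))
  /\
  (sparse_paving (positroid_bases k I) ->
     forall X : {set 'I_n},
       circuit_hyperplane (positroid_bases k I) X <->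
       exists i : 'I_n, I i != cyc_int k i /\ X = cyc_int k i).
Proof.
move=> hk2 hkn hN.
have n0 : 0 < n by lia.
have hkn1 : k <= n by lia.
set Bs := positroid_bases k I.
have hB0 : I (Ordinal n0) \in Bs := I_in_B hk2 hkn hN _.
have hBc : forall b, b \in Bs -> #|b| = k := fun b => @B_card _ _ _ hN b.
have hr : mrank Bs setT = k := mrank_full hB0 hBc.
have hrd : mrank (dual_bases Bs) setT = n - k := dual_mrank hB0 hBc.
have sp_cond : sparse_paving Bs -> forall i : 'I_n, I i != cyc_int k i ->
        [/\ I (cpred i) = cyc_int k (cpred i),
            I (csucc i) = cyc_int k (csucc i) &
            I i = (cyc_int k i :\ shift i (k - 1)) :|: [set shift i k]].
  case/andP => hp hd.
  have SP1 : forall X : {set 'I_n}, #|X| < k -> exists2 b, b \in Bs & X \subset b.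
    move=> X hX; apply/indepP; apply: (proj1 (paving_iff Bs) hp); by rewrite hr.
  have SP2 : forall U : {set 'I_n}, k < #|U| -> exists2 b, b \in Bs & b \subset U.
    move=> U hU.
    have : indep (dual_bases Bs) (~: U).
      apply: (proj1 (paving_iff _) hd); rewrite hrd; have := cC U; lia2.
    by case/dual_indepP => b hb; rewrite setCK => hs; exists b.
  exact: Cond hk2 hkn hN SP1 SP2.
split.
  split; first exact: sp_cond.
  move=> HC; apply/andP; split.
    apply/paving_iff; rewrite hr => X hX; apply/indepP; exact: SPA.
  apply/paving_iff; rewrite hrd => X hX; apply/dual_indepP; apply: (SPB hk2 hkn hN HC).
  have := cC X; lia2.
move=> hsp X; have HC := sp_cond hsp.
have SPA' := SPA hk2 hkn hN HC; have SPB' := SPB hk2 hkn hN HC.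
have Bc := Bchar hk2 hkn hN HC.
split.
- rewrite /circuit_hyperplane /circuit /hyperplane hr.
  case/andP => /andP [hni _] /andP [_ /eqP hm].
  have hXk : k <= #|X|.
    rewrite leqNgt; apply/negP => h; have [b hb hs] := SPA' X h.
    by apply: (negP hni); apply/indepP; exists b.
  have hXk' : #|X| <= k.
    rewrite leqNgt; apply/negP => h; have [b hb hs] := SPB' X h.
    have := mrank_ge X hb; rewrite (setIidPr hs) hBc // hm; lia.
  have cX : #|X| = k by lia.
  have hXB : X \notin Bs.
    by apply/negP => hXB; apply: (negP hni); apply/indepP; exists X.
  case: (boolP [exists i, (I i != P i k) && (X == P i k)]) => [/existsP [i /andP [h1 /eqP h2]]|hn].
    by exists i; rewrite cycP.
  exfalso; move/negP: hXB; apply; apply/Bc; split => // i hi.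
  apply/negP => /eqP e0; move/negP: hn; apply; apply/existsP; exists i; by rewrite hi e0 eqxx.
- case=> i [hi ->].
  have hi' : I i != P i k by rewrite -cycP.
  rewrite cycP //.
  have cC0 : #|P i k| = k by rewrite card_P.
  have hnB : P i k \notin Bs.
    by apply/negP => /Bc [_ h]; move: (h i hi'); rewrite eqxx.
  have hni : ~~ indep Bs (P i k).
    apply/negP => /indepP [b hb hs].
    have : P i k == b by rewrite eqEcard hs /= (hBc b hb) cC0.
    by move/eqP => e0; move: hnB; rewrite e0 hb.
  have mle : mrank Bs (P i k) <= k - 1.
    apply: mrank_le => b hb; rewrite leqNgt; apply/negP => hlt.
    have : P i k :&: b == P i k.
      rewrite eqEcard subsetIl; have := cC0; lia2.
    move/eqP => e0; apply: (negP hni); apply/indepP; exists b => //.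
    by rewrite -e0 subsetIr.
  have mge : k - 1 <= mrank Bs (P i k).
    set x := shift i 0.
    have hx : x \in P i k by rewrite inP tkey_shift; lia.
    have cx : #|P i k :\ x| = k - 1 by have := cD1 x (P i k); rewrite hx cC0; lia2.
    have [b hb hs] := SPA' (P i k :\ x) ltac:(rewrite cx; lia).
    apply: leq_trans (mrank_ge _ hb).
    have hs' : P i k :\ x \subset P i k :&: b by rewrite subsetI subD1set hs.
    have := sub_card hs'; rewrite cx //.
  apply/andP; split; last first.
    apply/andP; split.
      apply/forallP => e; apply/implyP => he.
      have ce : k < #|e |: P i k| by rewrite cU1 he cC0.
      have [b hb hs] := SPB' _ ce.
      have := mrank_ge (e |: P i k) hb; rewrite (setIidPr hs) hBc //.
      move=> hge; apply: leq_ltn_trans mle _; apply: leq_trans _ hge; lia.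
    apply/eqP; lia.
  rewrite /circuit hni /=; apply/forallP => Y; apply/implyP => hY; apply/indepP; apply: SPA'.
  have := proper_card hY; rewrite cC0 //.
Qed.
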